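(* Let $\Omega\subset\mathbb{R}^d$ be a domain and let $u\in\mathcal{S}^F(\Omega)$. Then $$L_u(u)\ge(2-\gamma)u^{\gamma-1}\quad\text{in }\{u>0\}\cap\Omega,\qquad\text{and}\qquad \Delta u\le u^{\gamma-1}\quad\text{in }\Omega.$$
   Context: Fix $d\ge1$, $\Lambda\ge1$, $\gamma\in(1,2)$. $\mathcal{S}_d$ is the space of real symmetric $d\times d$ matrices. Standing assumptions on $F:\mathcal{S}_d\to\mathbb{R}$: (i) uniform ellipticity: $\frac1\Lambda\|P\|\le F(M+P)-F(M)\le\Lambda\|P\|$ for all $M,P\in\mathcal{S}_d$, $P\ge0$; (ii) $F$ is convex, $F(0)=0$, and the trace map $M\mapsto \mathrm{trace}(M)$ is a sub-differential of $F$ at $0$; (iii) either $F$ is (Gâteaux) differentiable at $0$, or $F(\lambda M)=\lambda F(M)$ for all $\lambda>0$, $M\in\mathcal{S}_d$. A sub-differential of $F$ at $A\in\mathcal{S}_d$ is a linear map $S_A:\mathcal{S}_d\to\mathbb{R}$ with $S_A(M)\le F(A+M)-F(A)$ for all $M\in\mathcal{S}_d$. $\mathcal{S}^F(\Omega)$ is the class of continuous (viscosity, hence classical) solutions of $F(D^2u)=u^{\gamma-1}$, $u\ge0$ in $\Omega$. The linearized operator is $L_u(w)=S_{D^2u}(D^2w)-(\gamma-1)u^{\gamma-2}w$ in $\{u>0\}\cap\Omega$, where at each point $x$, $S_{D^2u}=S_{D^2u(x)}$ is a sub-differential of $F$ at $D^2u(x)$. *)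

(* Defs.v *)
From HB Require Import structures.
From mathcomp Require Import all_boot all_order all_algebra.
From mathcomp Require Import all_classical all_reals all_analysis.
Set Implicit Arguments. Unset Strict Implicit. Unset Printing Implicit Defensive.
Import Order.TTheory GRing.Theory Num.Theory.
Import numFieldNormedType.Exports.
Local Open Scope classical_set_scope.
Local Open Scope ring_scope.

Section Defs.
Variables (R : realType) (d : nat).

Definition symmx (M : 'M[R]_d) : Prop := M^T = M.

Definition psdmx (P : 'M[R]_d) : Prop :=
  forall v : 'rV[R]_d, 0 <= (v *m P *m v^T) 0 0.

(* operator (spectral) norm of a symmetric matrix: sup over Euclidean unit
   vectors v of |v P v^T| *)
Definition mxnorm (P : 'M[R]_d) : R :=
  sup [set r : R | exists v : 'rV[R]_d,
         (v *m v^T) 0 0 = 1 /\ r = `|(v *m P *m v^T) 0 0|].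

(* S is a linear map S_d -> R (values off S_d are irrelevant) *)
Definition sym_linear (S : 'M[R]_d -> R) : Prop :=
  forall (a : R) (M N : 'M[R]_d), symmx M -> symmx N ->
    S (a *: M + N) = a * S M + S N.

Definition is_subdiff (F : 'M[R]_d -> R) (A : 'M[R]_d) (S : 'M[R]_d -> R)
  : Prop :=
  sym_linear S /\ forall M, symmx M -> S M <= F (A + M) - F A.

Definition unif_elliptic (Lam : R) (F : 'M[R]_d -> R) : Prop :=
  forall M P : 'M[R]_d, symmx M -> symmx P -> psdmx P ->
    Lam^-1 * mxnorm P <= F (M + P) - F M /\ F (M + P) - F M <= Lam * mxnorm P.

Definition convex_on_sym (F : 'M[R]_d -> R) : Prop :=
  forall (M N : 'M[R]_d) (t : R), symmx M -> symmx N -> 0 <= t <= 1 ->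
    F ((1 - t) *: M + t *: N) <= (1 - t) * F M + t * F N.

Definition gateaux_diff (F : 'M[R]_d -> R) (A : 'M[R]_d) : Prop :=
  exists L : 'M[R]_d -> R, sym_linear L /\
    forall M, symmx M ->
      (fun t : R => (F (A + t *: M) - F A) / t) @ 0^' --> L M.

Definition pos_homogeneous (F : 'M[R]_d -> R) : Prop :=
  forall (l : R) (M : 'M[R]_d), 0 < l -> symmx M -> F (l *: M) = l * F M.

Definition standing_F (Lam : R) (F : 'M[R]_d -> R) : Prop :=
  [/\ unif_elliptic Lam F,
      convex_on_sym F, F 0 = 0, is_subdiff F 0 (@mxtrace R d)
    & gateaux_diff F 0 \/ pos_homogeneous F].

Definition ebasis (i : 'I_d) : 'rV[R]_d := delta_mx 0 i.

Definition hessian (u : 'rV[R]_d -> R) (x : 'rV[R]_d) : 'M[R]_d :=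
  \matrix_(i, j) ('D_(ebasis i) ('D_(ebasis j) u)) x.

Definition C2_on (Om : set 'rV[R]_d) (u : 'rV[R]_d -> R) : Prop :=
  [/\ forall x, Om x -> differentiable u x,
      forall j x, Om x -> differentiable ('D_(ebasis j) u) x
    & forall i j, {within Om, continuous ('D_(ebasis i) ('D_(ebasis j) u))}].

Definition in_SF (gam : R) (F : 'M[R]_d -> R) (Om : set 'rV[R]_d)
  (u : 'rV[R]_d -> R) : Prop :=
  [/\ C2_on Om u, forall x, Om x -> 0 <= u x
    & forall x, Om x -> F (hessian u x) = u x `^ (gam - 1)].

(* linearized operator L_u(w)(x) with the sub-differential S at D^2u(x) *)
Definition Lu (gam : R) (S : 'M[R]_d -> R) (u w : 'rV[R]_d -> R)
  (x : 'rV[R]_d) : R :=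
  S (hessian w x) - (gam - 1) * u x `^ (gam - 2) * w x.

End Defs.

(* Main.v *)
Require Import Defs.
From HB Require Import structures.
From mathcomp Require Import all_boot all_order all_algebra.
From mathcomp Require Import all_classical all_reals all_analysis.
From mathcomp Require Import ring lra.
Import Order.TTheory GRing.Theory Num.Theory.
Import numFieldNormedType.Exports.
Local Open Scope classical_set_scope.
Local Open Scope ring_scope.
Lemma L1 (R : realType) (V : normedModType R) (f : V -> R) (a p : V) (s : R) :
  derivable f (s *: a + p) a ->
  is_derive s 1 (fun t => f (t *: a + p)) ('D_a f (s *: a + p)).
Proof.
move=> df.
have E : (fun h : R => h^-1 *: (((fun t => f (t *: a + p)) \o shift s) (h *: 1) - f (s *: a + p)))
  = (fun h : R => h^-1 *: ((f \o shift (s *: a + p)) (h *: a) - f (s *: a + p))).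
  apply/funext => h /=; congr (_ *: (f _ - _)).
  by rewrite /shift /= [h *: 1]mulr1 scalerDl addrA.
split; rewrite /derivable /derive E //.
Qed.

Lemma LA (R : realType) (V : normedModType R) (f : V -> R) (a b x : V) (h : R) :
  0 < h ->
  (forall s t, 0 <= s <= h -> 0 <= t <= h -> differentiable f (x + s *: a + t *: b)) ->
  (forall s t, 0 <= s <= h -> 0 <= t <= h -> differentiable ('D_a f) (x + s *: a + t *: b)) ->
  exists s, exists t, [/\ 0 <= s <= h, 0 <= t <= h &
    f (x + h *: a + h *: b) - f (x + h *: b) - f (x + h *: a) + f x
      = h ^+ 2 * 'D_b ('D_a f) (x + s *: a + t *: b)].
Proof.
move=> h0 Hd Hd2.
have h0' : 0 <= h by apply: ltW.
have hh : 0 <= h <= h by apply/andP; split.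
have zh : (0:R) <= 0 <= h by apply/andP; split.
pose F1 := fun s : R => f (s *: a + (x + h *: b)).
pose F2 := fun s : R => f (s *: a + x).
have dg : forall s, 0 <= s <= h -> is_derive s 1 (F1 - F2)
    ('D_a f (s *: a + (x + h *: b)) - 'D_a f (s *: a + x)).
  move=> s hs; apply: is_deriveB; apply: L1; apply: diff_derivable.
    by rewrite addrCA addrA; apply: Hd.
  by rewrite addrC -[_ + _]addr0 -(scale0r b); apply: Hd.
have itv : forall s, s \in `[0, h] -> 0 <= s <= h.
  by move=> s; rewrite in_itv.
have itvo : forall s, s \in `]0, h[ -> 0 <= s <= h.
  by move=> s; rewrite in_itv /= => /andP[/ltW -> /ltW ->].
have [s1 s1in E1] := MVT h0 (fun s sin => dg s (itvo s sin))
  (derivable_within_continuous (fun s sin => @ex_derive _ _ _ _ _ _ _ (dg s (itv s sin)))).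
have s1h := itvo s1 s1in.
pose K := fun t : R => 'D_a f (t *: b + (x + s1 *: a)).
have dk : forall t, 0 <= t <= h -> is_derive t 1 K ('D_b ('D_a f) (t *: b + (x + s1 *: a))).
  move=> t ht; apply: L1; apply: diff_derivable.
  by rewrite addrC; apply: Hd2.
have [t1 t1in E2] := MVT h0 (fun s sin => dk s (itvo s sin))
  (derivable_within_continuous (fun s sin => @ex_derive _ _ _ _ _ _ _ (dk s (itv s sin)))).
exists s1, t1; split => //; first exact: itvo.
have e1 : f (h *: a + (x + h *: b)) - f (h *: a + x) - (f (0 *: a + (x + h *: b)) - f (0 *: a + x))
   = ('D_a f (s1 *: a + (x + h *: b)) - 'D_a f (s1 *: a + x)) * (h - 0) := E1.
have e2 : 'D_a f (h *: b + (x + s1 *: a)) - 'D_a f (0 *: b + (x + s1 *: a))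
   = 'D_b ('D_a f) (t1 *: b + (x + s1 *: a)) * (h - 0) := E2.
rewrite !scale0r !add0r subr0 in e1 e2.
have q1 : s1 *: a + (x + h *: b) = h *: b + (x + s1 *: a).
  by rewrite addrCA [RHS]addrCA [s1 *: a + _]addrC.
have q2 : x + h *: a + h *: b = h *: a + (x + h *: b) by rewrite [RHS]addrCA addrA.
rewrite q1 [s1 *: a + x]addrC e2 in e1.
rewrite q2 [x + h *: a]addrC [x + s1 *: a + _]addrC.
move: e1; set A := f _; set B := f _; set C := f _; set D := 'D_b _ _.
have -> : A - C - B + f x = A - B - (C - f x) by ring.
by move=> ->; ring.
Qed.

Lemma ar3 (R : realFieldType) (p q r s : R) : p - q - r + s = p - r - q + s.
Proof. by ring. Qed.
Lemma ar4 (R : realFieldType) (p q r : R) : `|p - q| <= `|p - r| + `|q - r|.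
Proof. by rewrite (_ : p - q = (p - r) - (q - r)) ?ler_normB //; ring. Qed.
Lemma ar (R : realFieldType) (A B : R) : 0 <= A -> 0 <= B -> A + B < 2 * (A + B + 1).
Proof. move=> ? ?; lra. Qed.
Lemma ar2 (R : realFieldType) (N e A B : R) : 0 < N -> e = N / 4 -> N <= A + B -> A < e -> B < e -> False.
Proof. move=> ? -> ? ? ?; lra. Qed.

Lemma LS (R : realType) (V : normedModType R) (f : V -> R) (a b x : V) (Om : set V) :
  open Om -> Om x ->
  (forall y, Om y -> differentiable f y) ->
  (forall y, Om y -> differentiable ('D_a f) y) ->
  (forall y, Om y -> differentiable ('D_b f) y) ->
  {for x, continuous ('D_b ('D_a f))} -> {for x, continuous ('D_a ('D_b f))} ->
  'D_b ('D_a f) x = 'D_a ('D_b f) x.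
Proof.
move=> oOm Omx Hf Ha Hb c1 c2.
apply/eqP; rewrite -subr_eq0; apply/negPn/negP => nz.
have np : 0 < `|'D_b ('D_a f) x - 'D_a ('D_b f) x| by rewrite normr_gt0.
set e := `|'D_b ('D_a f) x - 'D_a ('D_b f) x| / 4.
have e0 : 0 < e by rewrite divr_gt0.
have c1' : \forall y \near x, `|'D_b ('D_a f) x - 'D_b ('D_a f) y| < e.
  by move/cvgrPdist_lt: c1; apply.
have c2' : \forall y \near x, `|'D_a ('D_b f) x - 'D_a ('D_b f) y| < e.
  by move/cvgrPdist_lt: c2; apply.
have o' : \forall y \near x, Om y by apply: open_nbhs_nbhs.
have N : nbhs x (Om `&` ((fun y => `|'D_b ('D_a f) x - 'D_b ('D_a f) y| < e) `&` (fun y => `|'D_a ('D_b f) x - 'D_a ('D_b f) y| < e))).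
  by apply: filterI; [exact: o' | apply: filterI; [exact: c1' | exact: c2']].
have [del /= del0 Hdel] := (proj1 (nbhs_normP _ _) N).
pose h := del / (2 * (`|a| + `|b| + 1)).
have hpos : 0 < h by rewrite divr_gt0 // mulr_gt0 // ltr_wpDl // addr_ge0.
have hdel : h * (2 * (`|a| + `|b| + 1)) = del.
  by rewrite /h divfK // gt_eqF // mulr_gt0 // ltr_wpDl // addr_ge0.
have inB : forall s t, 0 <= s <= h -> 0 <= t <= h ->
    (Om `&` ((fun y => `|'D_b ('D_a f) x - 'D_b ('D_a f) y| < e)
      `&` (fun y => `|'D_a ('D_b f) x - 'D_a ('D_b f) y| < e))) (x + s *: a + t *: b).
  move=> s t /andP[s0 sh] /andP[t0 th]; apply: Hdel => /=.
  rewrite -addrA opprD addrA subrr add0r normrN.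
  apply: (le_lt_trans (ler_normD _ _)); rewrite !normrZ !ger0_norm //.
  rewrite -hdel; apply: (@le_lt_trans _ _ (h * `|a| + h * `|b|)).
    by rewrite lerD // ler_wpM2r.
  by rewrite -mulrDr ltr_pM2l // ar.
have [s1 [t1 [hs1 ht1 E1]]] := @LA _ _ f a b x h hpos (fun s t hs ht => Hf _ (inB s t hs ht).1)
   (fun s t hs ht => Ha _ (inB s t hs ht).1).
have [s2 [t2 [hs2 ht2 E2]]] := @LA _ _ f b a x h hpos
   (fun s t hs ht => Hf _ (eq_ind _ Om (inB t s ht hs).1 _ (addrAC _ _ _)))
   (fun s t hs ht => Hb _ (eq_ind _ Om (inB t s ht hs).1 _ (addrAC _ _ _))).
have Eq : 'D_b ('D_a f) (x + s1 *: a + t1 *: b) = 'D_a ('D_b f) (x + s2 *: b + t2 *: a).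
  have hne : h ^+ 2 != 0 by rewrite expf_neq0 // gt_eqF.
  apply: (mulfI hne); rewrite -E1 -E2 [x + h *: b + h *: a]addrAC; exact: ar3.
have i1 := (inB s1 t1 hs1 ht1).2.1.
have i2 := (inB t2 s2 ht2 hs2).2.2.
rewrite /= in i1 i2.
rewrite Eq in i1.
rewrite [x + t2 *: a + _]addrAC in i2.
have := ar4 _ ('D_b ('D_a f) x) ('D_a ('D_b f) x) ('D_a ('D_b f) (x + s2 *: b + t2 *: a)).
move=> tr; exact: (@ar2 _ _ _ _ _ np erefl tr i1 i2).
Qed.

Lemma ar5 (R : realFieldType) (g P SA : R) : P <= SA -> (2 - g) * P <= SA - (g - 1) * P.
Proof. move=> H; rewrite (_ : (2 - g) * P = P - (g - 1) * P); last by ring. by rewrite lerB. Qed.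

Lemma hess_sym (R : realType) (d : nat) (Om : set 'rV[R]_d) (u : 'rV[R]_d -> R) x :
  open Om -> C2_on Om u -> Om x -> symmx (hessian u x).
Proof.
move=> oOm [Hd Hd1 Hc] Omx; apply/matrixP => i j; rewrite !mxE.
have ct : forall i j, {for x, continuous ('D_(ebasis R i) ('D_(ebasis R j) u))}.
  move=> i' j'; have := Hc i' j'; rewrite continuous_open_subspace // => /(_ x).
  by apply; rewrite inE.
apply: (@LS _ _ u (ebasis R i) (ebasis R j) x Om oOm Omx Hd (Hd1 i) (Hd1 j) (ct j i) (ct i j)).
Qed.

Theorem proposition2p8 (R : realType) (d : nat) (Lam gam : R)
  (F : 'M[R]_d -> R) (Om : set 'rV[R]_d) (u : 'rV[R]_d -> R) :
  (1 <= d)%N -> 1 <= Lam -> 1 < gam < 2 ->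
  standing_F Lam F ->
  open Om -> connected Om ->
  in_SF gam F Om u ->
  (forall x, Om x -> 0 < u x ->
     forall S, is_subdiff F (hessian u x) S ->
       (2 - gam) * u x `^ (gam - 1) <= Lu gam S u u x)
  /\
  (forall x, Om x -> \tr (hessian u x) <= u x `^ (gam - 1)).
Proof.
move=> _ _ _ [_ _ F0 [_ trsub] _] oOm _ [HC upos Heq].
split.
- move=> x Omx ux S [Slin Ssub].
  have sA := @hess_sym _ _ Om u x oOm HC Omx.
  have s0 : symmx (0 : 'M[R]_d) by rewrite /symmx trmx0.
  have sN : symmx (- hessian u x).
    by move: (hessian u x) sA => A sA; apply/matrixP => i j; have := congr1 (fun M : 'M[R]_d => M i j) (sA : A^T = A); rewrite /= !mxE => <-.
  have S0 : S 0 = 0.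
    have := Slin 1 0 0 s0 s0; rewrite scaler0 addr0 mul1r => h.
    by have := addrK (S 0) (S 0); rewrite -h subrr.
  have SN : S (- hessian u x) = - S (hessian u x).
    have := Slin (-1) (hessian u x) 0 sA s0.
    by rewrite addr0 S0 addr0 scaleN1r mulN1r.
  have := Ssub _ sN; rewrite subrr F0 sub0r SN lerN2 Heq // => HS.
  rewrite /Lu -mulrA (_ : u x `^ (gam - 2) * u x = u x `^ (gam - 1)).
    exact: ar5.
  rewrite -{2}(powRr1 (ltW ux)) -powRD; last first.
    by rewrite (gt_eqF ux) implybT.
  by have -> : gam - 2 + 1 = gam - 1 by ring.
- move=> x Omx; rewrite -Heq //.
  have := trsub _ (@hess_sym _ _ Om u x oOm HC Omx); rewrite add0r F0 subr0.
  by [].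
Qed.
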